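(* For every fixed integer $k\ge1$, \[\lim_{M\to\infty}\frac{\mathrm{opt}_{\mathrm{bs}}(k,M)}{M}=\sup_{M\ge1}\frac{\mathrm{opt}_{\mathrm{bs}}(k,M)}{M}\] (in particular the limit exists).
   Context: Let $F$ be a family of functions from a set $X$ to a set $Y$. Online learning of $F$ is a game between a learner and an adversary: the adversary secretly fixes some $f\in F$ and presents inputs $x_1,x_2,\dots\in X$ one at a time, chosen adaptively; after each input $x_t$ the learner guesses a value for $f(x_t)$. A mistake is an incorrect guess. In the standard model, after each guess the adversary reveals the true value $f(x_t)$; in the bandit model, the adversary only says YES (guess correct) or NO (guess incorrect). $\mathrm{opt}_{\mathrm{std}}(F)$ (resp. $\mathrm{opt}_{\mathrm{bs}}(F)$) is the maximum number of mistakes the learner makes in the standard (resp. bandit) model when both learner and adversary play optimally (the learner minimizing, the adversary maximizing, the adversary's answers required to be consistent with some $f\in F$). For positive integers $k,M$, $\mathrm{opt}_{\mathrm{bs}}(k,M)$ denotes the maximum of $\mathrm{opt}_{\mathrm{bs}}(F)$ over all families $F$ of functions (with arbitrary domain) with codomain $\{0,1,\dots,k-1\}$ and $\mathrm{opt}_{\mathrm{std}}(F)=M$. *)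

(* Defs.v *)
From HB Require Import structures.
From mathcomp Require Import all_boot all_order all_algebra.
From mathcomp Require Import all_classical all_reals all_analysis.
Set Implicit Arguments. Unset Strict Implicit. Unset Printing Implicit Defensive.
Import Order.TTheory GRing.Theory Num.Theory.
Local Open Scope classical_set_scope.
Local Open Scope ring_scope.

(* Version space after learning that f x = v, resp. f x <> v. *)
Definition restrict_eq {X Y : Type} (V : set (X -> Y)) (x : X) (v : Y) :
  set (X -> Y) := [set f | V f /\ f x = v].
Definition restrict_neq {X Y : Type} (V : set (X -> Y)) (x : X) (v : Y) :
  set (X -> Y) := [set f | V f /\ f x <> v].

(* forces_std V m : in the standard model, starting from the version space V
   (the set of functions consistent with the answers so far), the adversary
   has a strategy guaranteeing at least m more mistakes of the learner while
   keeping all answers consistent with some function of V.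
   Each round: the adversary picks x, the learner guesses y, the adversary
   reveals a value v (mistake iff v <> y). *)
Inductive forces_std {X Y : Type} : set (X -> Y) -> nat -> Prop :=
| fstd0 V : (exists f, V f) -> forces_std V 0
| fstdS V m :
    (exists x : X, forall y : Y,
        (exists v : Y, v <> y /\ forces_std (restrict_eq V x v) m)
        \/ forces_std (restrict_eq V x y) m.+1) ->
    forces_std V m.+1.

(* forces_bs V m : same in the bandit model; the adversary only answers
   YES (f x = y, no mistake) or NO (f x <> y, a mistake). *)
Inductive forces_bs {X Y : Type} : set (X -> Y) -> nat -> Prop :=
| fbs0 V : (exists f, V f) -> forces_bs V 0
| fbsS V m :
    (exists x : X, forall y : Y,
        forces_bs (restrict_neq V x y) m
        \/ forces_bs (restrict_eq V x y) m.+1) ->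
    forces_bs V m.+1.

(* opt values, in the extended reals (+oo if unbounded, -oo if F is empty). *)
Definition opt_std (R : realType) {X Y : Type} (F : set (X -> Y)) : \bar R :=
  ereal_sup [set (m%:R)%:E | m in [set m : nat | forces_std F m]].
Definition opt_bs (R : realType) {X Y : Type} (F : set (X -> Y)) : \bar R :=
  ereal_sup [set (m%:R)%:E | m in [set m : nat | forces_bs F m]].

Definition opt_bs_kM (R : realType) (k M : nat) : \bar R :=
  ereal_sup [set r : \bar R | exists (X : Type) (F : set (X -> 'I_k)),
      opt_std R F = (M%:R)%:E /\ r = opt_bs R F].

Definition bs_ratio (R : realType) (k M : nat) : \bar R :=
  (opt_bs_kM R k M * ((M%:R)^-1)%:E)%E.

(* Main.v *)
Require Import Defs.
From HB Require Import structures.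
From mathcomp Require Import all_boot all_order all_algebra.
From mathcomp Require Import all_classical all_reals all_analysis.
From mathcomp Require Import lra zify.
Import Order.TTheory GRing.Theory Num.Theory.
Local Open Scope classical_set_scope.
Local Open Scope ring_scope.

Section Comb.
Context {X Y : Type}.

Fixpoint fstd_ind (P : set (X -> Y) -> nat -> Prop)
  (H0 : forall V, (exists f, V f) -> P V 0)
  (HS : forall V m, (exists x : X, forall y : Y,
        (exists v : Y, v <> y /\ forces_std (restrict_eq V x v) m /\ P (restrict_eq V x v) m)
        \/ (forces_std (restrict_eq V x y) m.+1 /\ P (restrict_eq V x y) m.+1)) -> P V m.+1)
  V m (H : forces_std V m) {struct H} : P V m :=
  match H in forces_std V m return P V m with
  | fstd0 V h => H0 V h
  | fstdS V m h => HS V m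
     match h with ex_intro x hx => ex_intro _ x (fun y =>
       match hx y with
       | or_introl (ex_intro v (conj hv hf)) =>
           or_introl (ex_intro _ v (conj hv (conj hf (fstd_ind P H0 HS _ _ hf))))
       | or_intror hf => or_intror (conj hf (fstd_ind P H0 HS _ _ hf))
       end) end
  end.

Fixpoint fbs_ind (P : set (X -> Y) -> nat -> Prop)
  (H0 : forall V, (exists f, V f) -> P V 0)
  (HS : forall V m, (exists x : X, forall y : Y,
        (forces_bs (restrict_neq V x y) m /\ P (restrict_neq V x y) m)
        \/ (forces_bs (restrict_eq V x y) m.+1 /\ P (restrict_eq V x y) m.+1)) -> P V m.+1)
  V m (H : forces_bs V m) {struct H} : P V m :=
  match H in forces_bs V m return P V m with
  | fbs0 V h => H0 V h
  | fbsS V m h => HS V m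
     match h with ex_intro x hx => ex_intro _ x (fun y =>
       match hx y with
       | or_introl hf => or_introl (conj hf (fbs_ind P H0 HS _ _ hf))
       | or_intror hf => or_intror (conj hf (fbs_ind P H0 HS _ _ hf))
       end) end
  end.


End Comb.

Arguments fstd_ind {X Y} P H0 HS {V m} H.
Arguments fbs_ind {X Y} P H0 HS {V m} H.

Section Comb2.
Context {X Y : Type} (y0 : Y).

Lemma std_ne {V : set (X -> Y)} {m} : forces_std V m -> exists f, V f.
Proof.
move=> H; apply: (fstd_ind (fun V m => exists f, V f)) H => // {}V {}m [x hx].
case: (hx y0) => [[v [_ [_ [f [Vf _]]]]]|[_ [f [Vf _]]]]; by exists f.
Qed.

Lemma std_inv {V : set (X -> Y)} {m} : forces_std V m.+1 -> exists x : X, forall y : Y,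
        (exists v : Y, v <> y /\ forces_std (restrict_eq V x v) m)
        \/ forces_std (restrict_eq V x y) m.+1.
Proof. by move=> H; inversion H. Qed.

Lemma bs_inv {V : set (X -> Y)} {m} : forces_bs V m.+1 -> exists x : X, forall y : Y,
        forces_bs (restrict_neq V x y) m
        \/ forces_bs (restrict_eq V x y) m.+1.
Proof. by move=> H; inversion H. Qed.

Lemma std_down m : forall (V : set (X -> Y)), forces_std V m.+1 -> forces_std V m.
Proof.
move=> V H; have := H; move: H.
apply: (fstd_ind (fun V n => forces_std V n -> forces_std V n.-1)) => // {}V {}m [x hx] H /=.
case: m hx H => [|m] hx H; first by constructor; apply: std_ne H.
constructor; exists x => y; case: (hx y) => [[v [hv [h P']]]|[h P']].
  by left; exists v; split => //; apply: P'.
by right; apply: P'.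
Qed.

Lemma std_down_le (V : set (X -> Y)) m j : (j <= m)%N -> forces_std V m -> forces_std V j.
Proof.
move=> /subnK <-; elim: (m - j)%N => [//|d IH] H.
by apply: IH; apply: std_down; rewrite -addSn.
Qed.

Lemma allEq_std (V : set (X -> Y)) m : (forall f g, V f -> V g -> f = g) ->
  forces_std V m -> m = 0%N.
Proof.
move=> heq H; move: H heq.
apply: (fstd_ind (fun V m => (forall f g, V f -> V g -> f = g) -> m = 0%N)) => // {}V {}m [x hx] heq.
exfalso.
have [f0 Vf0] : exists f, V f.
  by case: (hx y0) => [[v [_ [h _]]]|[h _]]; have [f [Vf _]] := std_ne h; exists f.
case: (hx (f0 x)) => [[v [hv [h _]]]|[_ P']].
  have [g [Vg gx]] := std_ne h.
  by apply: hv; rewrite -gx (heq f0 g).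
suff : (m.+1 = 0)%N by [].
by apply: P' => f g [Vf _] [Vg _]; apply: heq.
Qed.

End Comb2.
Arguments std_down_le {X Y} y0 {V m j}.
Arguments allEq_std {X Y} y0 {V m}.

Definition prodF {X1 X2 Y : Type} (V1 : set (X1 -> Y)) (V2 : set (X2 -> Y)) :
  set (X1 + X2 -> Y) := [set f | V1 (fun a => f (inl a)) /\ V2 (fun b => f (inr b))].

Section Prod.
Context {X1 X2 Y : Type} (y0 : Y).

Lemma req_inl (V1 : set (X1 -> Y)) (V2 : set (X2 -> Y)) x v : restrict_eq (prodF V1 V2) (inl x) v = prodF (restrict_eq V1 x v) V2.
Proof. by apply/seteqP; split=> f /=; rewrite /prodF /restrict_eq /=; tauto. Qed.
Lemma req_inr (V1 : set (X1 -> Y)) (V2 : set (X2 -> Y)) x v : restrict_eq (prodF V1 V2) (inr x) v = prodF V1 (restrict_eq V2 x v).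
Proof. by apply/seteqP; split=> f /=; rewrite /prodF /restrict_eq /=; tauto. Qed.
Lemma rneq_inl (V1 : set (X1 -> Y)) (V2 : set (X2 -> Y)) x v : restrict_neq (prodF V1 V2) (inl x) v = prodF (restrict_neq V1 x v) V2.
Proof. by apply/seteqP; split=> f /=; rewrite /prodF /restrict_neq /=; tauto. Qed.
Lemma rneq_inr (V1 : set (X1 -> Y)) (V2 : set (X2 -> Y)) x v : restrict_neq (prodF V1 V2) (inr x) v = prodF V1 (restrict_neq V2 x v).
Proof. by apply/seteqP; split=> f /=; rewrite /prodF /restrict_neq /=; tauto. Qed.

Lemma prod_ne (V1 : set (X1 -> Y)) (V2 : set (X2 -> Y)) : (exists f, V1 f) -> (exists f, V2 f) -> exists f, prodF V1 V2 f.
Proof.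
move=> [f1 h1] [f2 h2].
by exists (fun s => match s with inl a => f1 a | inr b => f2 b end); split.
Qed.

Lemma std_prod_lower (V1 : set (X1 -> Y)) (V2 : set (X2 -> Y)) a b : forces_std V1 a -> forces_std V2 b ->
  forces_std (prodF V1 V2) (a + b).
Proof.
move=> H1; move: H1 b V2.
apply: (fstd_ind (fun V1 a => forall b V2, forces_std V2 b ->
   forces_std (prodF V1 V2) (a + b))).
  move=> {}V1 ne1 b {}V2 H2; rewrite add0n; move: H2.
  apply: (fstd_ind (fun V2 b => forces_std (prodF V1 V2) b)).
    by move=> {}V2 ne2; constructor; apply: prod_ne.
  move=> {}V2 m [x hx]; constructor; exists (inr x) => y.
  case: (hx y) => [[v [hv [_ h]]]|[_ h]].
    by left; exists v; split => //; rewrite req_inr.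
  by right; rewrite req_inr.
move=> {}V1 m [x hx] b {}V2 h2; rewrite addSn; constructor; exists (inl x) => y.
case: (hx y) => [[v [hv [_ h]]]|[_ h]].
  by left; exists v; split => //; rewrite req_inl; apply: h.
by right; rewrite req_inl -addSn; apply: h.
Qed.

Lemma bs_prod_lower (V1 : set (X1 -> Y)) (V2 : set (X2 -> Y)) a b : forces_bs V1 a -> forces_bs V2 b ->
  forces_bs (prodF V1 V2) (a + b).
Proof.
move=> H1; move: H1 b V2.
apply: (fbs_ind (fun V1 a => forall b V2, forces_bs V2 b ->
   forces_bs (prodF V1 V2) (a + b))).
  move=> {}V1 ne1 b {}V2 H2; rewrite add0n; move: H2.
  apply: (fbs_ind (fun V2 b => forces_bs (prodF V1 V2) b)).
    by move=> {}V2 ne2; constructor; apply: prod_ne.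
  move=> {}V2 m [x hx]; constructor; exists (inr x) => y.
  case: (hx y) => [[_ h]|[_ h]].
    by left; rewrite rneq_inr.
  by right; rewrite req_inr.
move=> {}V1 m [x hx] b {}V2 h2; rewrite addSn; constructor; exists (inl x) => y.
case: (hx y) => [[_ h]|[_ h]].
  by left; rewrite rneq_inl; apply: h.
by right; rewrite req_inl -addSn; apply: h.
Qed.

Lemma std_prod_upper (V1 : set (X1 -> Y)) (V2 : set (X2 -> Y)) a b : forces_std (prodF V1 V2) (a + b).+1 ->
  forces_std V1 a.+1 \/ forces_std V2 b.+1.
Proof.
move=> H.
suff : forall (W : set (X1 + X2 -> Y)) M, forces_std W M -> forall V1 V2 a b, W = prodF V1 V2 -> M = (a + b).+1 ->
  forces_std V1 a.+1 \/ forces_std V2 b.+1 by move=> /(_ _ _ H V1 V2 a b erefl erefl).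
move=> W M {}H; clear V1 V2 a b; move: H.
apply: (fstd_ind (fun W M => forall V1 V2 a b, W = prodF V1 V2 -> M = (a + b).+1 ->
  forces_std V1 a.+1 \/ forces_std V2 b.+1)) => //.
move=> {}W m [x hx] V1 V2 a b eW [em]; subst W.
case: x hx => [x1|x2] hx.
- have [|n2] := pselect (forces_std V2 b.+1); first by right.
  left; constructor; exists x1 => y.
  case: (hx y) => [[v [hv [hf P']]]|[hf P']].
  + left; exists v; split => //; rewrite req_inl in hf P'.
    case: a em => [|a'] em.
      have [f [hf1 _]] := std_ne y0 hf.
      by apply: fstd0; exists (fun a => f (inl a)).
    by case: (P' _ V2 a' b erefl _) => //; rewrite em addSn.
  + right; rewrite req_inl in P'; case: (P' _ V2 a b erefl _) => //.
    by rewrite em.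
- have [|n1] := pselect (forces_std V1 a.+1); first by left.
  right; constructor; exists x2 => y.
  case: (hx y) => [[v [hv [hf P']]]|[hf P']].
  + left; exists v; split => //; rewrite req_inr in hf P'.
    case: b em => [|b'] em.
      have [f [_ hf1]] := std_ne y0 hf.
      by apply: fstd0; exists (fun a => f (inr a)).
    by case: (P' V1 _ a b' erefl _) => //; rewrite em addnS.
  + right; rewrite req_inr in P'; case: (P' V1 _ a b erefl _) => //.
    by rewrite em.
Qed.

End Prod.

Section Opt.
Context (R : realType).

Lemma optstd_eq {X Y : Type} (y0 : Y) (V : set (X -> Y)) n :
  opt_std R V = (n%:R)%:E <-> forces_std V n /\ ~ forces_std V n.+1.
Proof.
split.
  move=> e.
  have nf : ~ forces_std V n.+1.
    move=> h; have : ((n.+1)%:R%:E <= opt_std R V)%E.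
      by apply: ereal_sup_ubound; exists n.+1.
    by rewrite e lee_fin ler_nat ltnn.
  split => //.
  have [//|hn] := pselect (forces_std V n).
  have : (opt_std R V <= (n%:R - 1)%:E)%E.
    apply: ge_ereal_sup => _ [m hm <-]; rewrite lee_fin.
    have lt : (m < n)%N.
      by rewrite ltnNge; apply/negP => le; apply: hn; exact: (std_down_le y0 le hm).
    by move: lt; rewrite -(ler_nat R) -natr1 => h; lra.
  by rewrite e lee_fin; lra.
move=> [hn hn1]; apply/eqP; rewrite eq_le; apply/andP; split.
  apply: ge_ereal_sup => _ [m hm <-]; rewrite lee_fin ler_nat leqNgt.
  by apply/negP => lt; apply: hn1; exact: (std_down_le y0 lt hm).
by apply: ereal_sup_ubound; exists n.
Qed.

Lemma optstd_prod {X1 X2 Y : Type} (y0 : Y) (V1 : set (X1 -> Y)) (V2 : set (X2 -> Y)) a b :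
  opt_std R V1 = a%:R%:E -> opt_std R V2 = b%:R%:E ->
  opt_std R (prodF V1 V2) = (a + b)%:R%:E.
Proof.
move=> /(optstd_eq y0) [h1 n1] /(optstd_eq y0) [h2 n2].
apply/(optstd_eq y0); split; first exact: std_prod_lower.
by move=> /(std_prod_upper y0) [].
Qed.

Lemma pad k (hk : (1 < k)%N) r :
  exists (X : Type) (F : set (X -> 'I_k)), opt_std R F = r%:R%:E.
Proof.
case: k hk => [|[|k]] // _.
pose y0 : 'I_k.+2 := ord0.
pose B := [set: unit -> 'I_k.+2].
have hB : opt_std R B = 1%:R%:E.
  apply/(optstd_eq y0); split.
    constructor; exists tt => y; left.
    pose o : 'I_k.+2 := if y == ord0 then lift ord0 ord0 else ord0.
    exists o; split.
      rewrite /o; case: eqP => [->|hy]; last by move=> e; apply: hy; rewrite e.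
      by move/eqP; rewrite eq_sym (negbTE (neq_lift _ _)).
    by constructor; exists (fun _ => o).
  move=> /std_inv [x hx]; case: (hx y0) => [[v [_ h]]|h].
    suff : 1%N = 0%N by [].
    apply: (allEq_std y0 _ h) => f g [_ fe] [_ ge].
    by apply: funext => -[]; move: fe ge; case: x {hx h} => fe ge; rewrite fe ge.
  suff : 2%N = 0%N by [].
  apply: (allEq_std y0 _ h) => f g [_ fe] [_ ge].
  by apply: funext => -[]; move: fe ge; case: x {hx h} => fe ge; rewrite fe ge.
elim: r => [|r [X [F hF]]].
  exists unit, [set f | f = fun _ => y0].
  apply/(optstd_eq y0); split; first by constructor; exists (fun _ => y0).
  move=> h; suff : 1%N = 0%N by [].
  by apply: (allEq_std y0 _ h) => f g -> ->.
exists (X + unit)%type, (prodF F B).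
by rewrite (optstd_prod y0 F B r 1 hF hB) addn1.
Qed.

Lemma fam k (hk : (1 < k)%N) X (F : set (X -> 'I_k)) m t :
  opt_std R F = m%:R%:E -> forces_bs F t -> forall q r,
  exists (X' : Type) (G : set (X' -> 'I_k)),
    opt_std R G = (q * m + r)%:R%:E /\ forces_bs G (q * t).
Proof.
have y0 : 'I_k by exists 0%N; lia.
move=> hF ht q r; elim: q => [|q [X' [G [hG hb]]]].
  have [X' [G hG]] := pad k hk r.
  exists X', G; split; first by rewrite mul0n add0n.
  have [h _] := (optstd_eq y0 _ _).1 hG.
  by rewrite mul0n; apply: fbs0; exact: (std_ne y0 h).
exists (X' + X)%type, (prodF G F); split.
  by rewrite (optstd_prod y0 G F _ _ hG hF); congr (_%:R%:E); lia.
by rewrite mulSn addnC; apply: bs_prod_lower.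
Qed.

End Opt.

Lemma cvg_lemma (R : realType) (u : nat -> \bar R) (L : \bar R) :
  (forall n, (1 <= n)%N -> (u n <= L)%E) ->
  (forall l : R, (l%:E < L)%E -> \forall n \near \oo, (l%:E < u n)%E) ->
  u @ \oo --> L.
Proof.
move=> hub hlb; case: L hub hlb => [r| |] hub hlb.
- apply/fine_cvgP; split.
    apply: filterS2 (hlb (r-1) _) (nbhs_infty_ge 1) => [n h1 h2|]; last by rewrite lte_fin; lra.
    have h3 := hub n h2; move: (u n) h1 h3 => [x| |] //=.
  apply/cvgrPdist_lt => e e0.
  apply: filterS2 (hlb (r-e) _) (nbhs_infty_ge 1) => [n h1 h2|]; last by rewrite lte_fin; lra.
  have h3 := hub n h2; rewrite /=; move: (u n) h1 h3 => [x| |] //=; rewrite !lte_fin !lee_fin => h1 h3.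
  rewrite ger0_norm; lra.
- apply/(cvgeyPgt (F := \oo)) => A. apply: hlb; exact: ltry.
- apply/cvgeNyPle => A; apply: filterS (nbhs_infty_ge 1) => n h.
  by have := hub n h; rewrite leeNy_eq => /eqP ->; exact: leNye.
Qed.

Theorem mainTheorem5 (R : realType) (k : nat) (hk : (1 <= k)%N) :
  bs_ratio R k @ \oo --> ereal_sup [set bs_ratio R k M | M in [set M : nat | (1 <= M)%N]].
Proof.
apply: cvg_lemma.
  by move=> n hn; apply: ereal_sup_ubound; exists n.
move=> l hl.
have [_ [m hm <-] hlm] := ereal_sup_gt hl.
rewrite /= in hm.
have m0 : (0 < m%:R :> R) by rewrite ltr0n.
have hlm' : ((l * m%:R)%:E < opt_bs_kM R k m)%E.
  move: hlm; rewrite /bs_ratio; case: (opt_bs_kM R k m) => [s| |] /=.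
  - by rewrite -EFinM !lte_fin ltr_pdivlMr.
  - by rewrite ltry.
  - by rewrite gt0_mulNye ?lte_fin ?invr_gt0.
have [_ [X [F [hF ->]]] hF2] := ereal_sup_gt hlm'.
have [_ [t ht <-] hlt] := ereal_sup_gt hF2.
rewrite lte_fin in hlt.
have y0 : 'I_k by exists 0%N; lia.
have hk2 : (1 < k)%N.
  rewrite ltn_neqAle hk andbT; apply/eqP => ek.
  have [hs _] := (optstd_eq R y0 _ _).1 hF.
  have : m = 0%N.
    apply: (allEq_std y0 _ hs) => f g _ _; apply: funext => x; apply: val_inj.
    change (nat_of_ord (f x) = nat_of_ord (g x)); move: (ltn_ord (f x)) (ltn_ord (g x)); lia.
  by move=> e; rewrite e in hm.
pose d := t%:R - l * m%:R.
have d0 : 0 < d by rewrite /d; lra.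
apply: filterS2 (nbhs_infty_gtr (m%:R * t%:R / d)) (nbhs_infty_ge 1) => n hn n1.
have [X' [G [hG hb]]] := fam R k hk2 X F m t hF ht (n %/ m) (n %% m).
rewrite -divn_eq in hG.
have hG' : (((n %/ m * t)%:R)%:E <= opt_bs_kM R k n)%E.
  apply: (le_trans (y := opt_bs R G)).
    by apply: ereal_sup_ubound; exists (n %/ m * t)%N.
  by apply: ereal_sup_ubound; exists X', G.
rewrite /bs_ratio.
have h0 : (0 <= ((n%:R)^-1)%:E :> \bar R)%E by rewrite lee_fin invr_ge0 ler0n.
apply: (lt_le_trans _ (lee_wpmul2r h0 hG')).
have n0 : (0 < n%:R :> R) by rewrite ltr0n.
rewrite -EFinM lte_fin ltr_pdivlMr //.
have e := divn_eq n m.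
have rm : (n %% m < m)%N by rewrite ltn_pmod.
move: hn; rewrite ltr_pdivrMr // => hn.
have eR : (n%:R : R) = (n %/ m)%:R * m%:R + (n %% m)%:R by rewrite {1}e natrD natrM.
have rR : ((n %% m)%:R + 1 : R) <= m%:R by rewrite natr1 ler_nat.
rewrite natrM.
have T0 : (0 : R) <= t%:R by rewrite ler0n.
move: hn eR rR T0 m0; rewrite /d.
move: (n %/ m)%:R (n %% m)%:R (n%:R : R) (m%:R : R) (t%:R : R) => Q Rr N M T.
move=> hn eR rR T0 M0.
have hint : Rr * T <= (M - 1) * T by apply: ler_wpM2r => //; lra.
rewrite eR in hn *.
have key : (l * (Q * M + Rr) - Q * T) * M < 0 by nra.
nra.
Qed.
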